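(* There exists a function $g: \mathbb{N} \times \mathbb{N} \rightarrow \mathbb{N}$ such that, for all positive integers $\ell,d$, if a matroid $M$ has at least $g(\ell,d)$ distinct $\ell$-element circuits, then $M$ has a collection of $d$ pairwise disjoint circuits.
   Context: $\mathbb{N}$ denotes the set of positive integers. *)

(* Defs.v *)
From mathcomp Require Import all_boot.
Set Implicit Arguments. Unset Strict Implicit. Unset Printing Implicit Defensive.

Record matroid (T : finType) := Matroid {
  indep : pred {set T};
  indep0 : indep set0;
  indep_sub : forall A B : {set T}, A \subset B -> indep B -> indep A;
  indep_aug : forall A B : {set T}, indep A -> indep B -> #|A| < #|B| ->
      exists2 x, x \in B :\: A & indep (x |: A)
}.

Definition circuit (T : finType) (M : matroid T) (C : {set T}) : bool :=
  minset (fun X : {set T} => ~~ indep M X) C.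

Definition circuits_of_size (T : finType) (M : matroid T) (l : nat) : {set {set T}} :=
  [set C | circuit M C & #|C| == l].

(* Main.v *)
Require Import Defs.
From mathcomp Require Import all_boot.
From mathcomp Require Import zify.

Set Implicit Arguments. Unset Strict Implicit. Unset Printing Implicit Defensive.

Lemma disjP (T : finType) (A B : {set T}) x :
  [disjoint A & B] -> x \in A -> x \in B -> False.
Proof. by move=> d a; rewrite (disjointFr d a). Qed.

Lemma mkdisj (T : finType) (A B : {set T}) :
  (forall x, x \in A -> x \in B -> False) -> [disjoint A & B].
Proof.
move=> H; apply/pred0P => w /=; apply/negbTE/andP => -[a b]; exact: H w a b.
Qed.

Lemma card_bigcup_le (T I : finType) (S : {pred I}) (F : I -> {set T}) :
  #|\bigcup_(x in S) F x| <= \sum_(x in S) #|F x|.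
Proof.
apply: (@big_ind2 _ _ (fun (U : {set T}) (n : nat) => #|U| <= n)) => //; first by rewrite cards0.
move=> U1 n1 U2 n2 h1 h2; apply: leq_trans (leq_card_setU U1 U2).1 _.
exact: leq_add.
Qed.

Fixpoint f (l m : nat) : nat :=
  if l is l'.+1 then m.+1 * l'.+1 * (f l' m.*2).+1 else 1.

Lemma f_pos l m : 0 < f l m.
Proof. by case: l => [|l] //=; rewrite !muln_gt0. Qed.

Lemma ineq m l n : m * l.+1 * n < m.+1 * l.+1 * n.+1.
Proof. nia. Qed.

Section Mat.
Variables (T : finType) (M : matroid T).
Local Notation ind := (indep M).

Lemma circuit_dep C : circuit M C -> ~~ ind C.
Proof. by case/minsetP. Qed.

Lemma circuit_min C (A : {set T}) : circuit M C -> A \proper C -> ind A.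
Proof.
move=> /minsetP [_ H]; rewrite properE => /andP [sAC nsCA].
apply/negPn/negP => dA; have e := H A dA sAC.
by rewrite e subxx in nsCA.
Qed.

Lemma circuit_sub C1 C2 : circuit M C1 -> circuit M C2 -> C1 \subset C2 -> C1 = C2.
Proof. move=> c1 /minsetP [_ H] s; exact: H _ (circuit_dep c1) s. Qed.

Lemma dep_circuit D : ~~ ind D -> exists2 C, circuit M C & C \subset D.
Proof.
move=> dD; case: (minset_exists (P := fun X => ~~ ind X) dD) => C c s.
by exists C.
Qed.

Lemma circ_elim C1 C2 x : circuit M C1 -> circuit M C2 -> C1 != C2 ->
  x \in C1 -> x \in C2 -> ~~ ind ((C1 :|: C2) :\ x).
Proof.
move=> c1 c2 neq x1 x2; apply/negP => iI.
set U := C1 :|: C2.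
have [y yC1 yC2] : exists2 y, y \in C1 & y \notin C2.
  case: (boolP (C1 \subset C2)) => [s|].
    by rewrite (circuit_sub c1 c2 s) eqxx in neq.
  by case/subsetPn => y ? ?; exists y.
have iC1y : ind (C1 :\ y) by apply: (circuit_min c1); exact: properD1.
pose P := fun J : {set T} => [&& ind J, J \subset U & C1 :\ y \subset J].
have PC : P (C1 :\ y).
  rewrite /P iC1y subxx andbT /=.
  exact: subset_trans (subsetDl _ _) (subsetUl _ _).
case: (maxset_exists PC) => J /maxsetP [/and3P [iJ sJU sCJ] maxJ] _.
have yJ : y \notin J.
  apply/negP => yJ.
  have s : C1 \subset J.
    apply/subsetP => z zC; case: (eqVneq z y) => [->//|nzy].
    by apply: (subsetP sCJ); rewrite !inE nzy.
  by move: (circuit_dep c1); rewrite (indep_sub s iJ).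
have [z zC2 zJ] : exists2 z, z \in C2 & z \notin J.
  case: (boolP (C2 \subset J)) => [s|].
    by move: (circuit_dep c2); rewrite (indep_sub s iJ).
  by case/subsetPn => z ? ?; exists z.
have yU : y \in U by rewrite !inE yC1.
have xU : x \in U by rewrite !inE x1.
have JP : J \proper U :\ y.
  rewrite properE; apply/andP; split.
    apply/subsetP => w wJ; rewrite in_setD1 (subsetP sJU w wJ) andbT.
    by apply/eqP => e; rewrite -e wJ in yJ.
  apply/negP => s.
  have : z \in U :\ y.
    rewrite !inE zC2 orbT andbT; by apply/eqP => e; rewrite -e zC2 in yC2.
  by move/(subsetP s); rewrite (negbTE zJ).
have ltJ : #|J| < #|U :\ x|.
  have hx := cardsD1 x U; have hy := cardsD1 y U.
  rewrite xU /= add1n in hx; rewrite yU /= add1n in hy.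
  have e : #|U :\ y| = #|U :\ x| by apply: succn_inj; rewrite -hx -hy.
  by rewrite -e; exact: proper_card JP.
case: (indep_aug iJ iI ltJ) => w /setDP [wI wJ] iwJ.
have Pw : P (w |: J).
  rewrite /P iwJ /= subUset sub1set sJU andbT.
  move: wI; rewrite in_setD1 => /andP [_ ->] /=.
  exact: subset_trans sCJ (subsetUr _ _).
have e := maxJ _ Pw (subsetUr _ _).
by move: wJ; rewrite -e setU11.
Qed.

Lemma key (K D1 D2 : {set T}) x : ind (x |: K) -> [disjoint D1 & D2] ->
  ~~ ind (D1 :|: (x |: K)) -> ~~ ind (D2 :|: (x |: K)) ->
  ~~ ind (D1 :|: D2 :|: K).
Proof.
move=> iK dis d1 d2; apply/negP => iI.
have circ : forall D : {set T}, D \subset D1 :|: D2 -> ~~ ind (D :|: (x |: K)) ->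
    exists2 C, circuit M C & C \subset D :|: (x |: K) /\ x \in C.
  move=> D sD dD; case: (dep_circuit dD) => C cC sC.
  exists C => //; split => //.
  apply/negPn/negP => xC.
  have s : C \subset D1 :|: D2 :|: K.
    apply/subsetP => w wC; have := subsetP sC w wC.
    rewrite !in_setU in_set1 => /orP [wD|/orP [/eqP wx|wK]].
    - by have := subsetP sD w wD; rewrite in_setU => ->.
    - by move: xC; rewrite -wx wC.
    - by rewrite wK orbT.
  by move: (circuit_dep cC); rewrite (indep_sub s iI).
case: (circ D1 (subsetUl _ _) d1) => C1 c1 [s1 x1].
case: (circ D2 (subsetUr _ _) d2) => C2 c2 [s2 x2].
have neq : C1 != C2.
  apply/eqP => e.
  have s : C1 \subset x |: K.
    apply/subsetP => w w1.
    have h1 := subsetP s1 w w1.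
    have h2 : w \in D2 :|: (x |: K) by apply: (subsetP s2); rewrite -e.
    move: h1 h2; rewrite !in_setU => /orP [a|h] /orP [b|h'] //.
    by case: (disjP dis a b).
  by move: (circuit_dep c1); rewrite (indep_sub s iK).
have := circ_elim c1 c2 neq x1 x2.
have s : (C1 :|: C2) :\ x \subset D1 :|: D2 :|: K.
  apply/subsetP => w; rewrite !inE => /andP [nwx /orP [w1|w2]].
    have := subsetP s1 w w1; rewrite !inE (negbTE nwx) /=.
    by case/orP => ->; rewrite ?orbT.
  have := subsetP s2 w w2; rewrite !inE (negbTE nwx) /=.
  by case/orP => ->; rewrite ?orbT.
by rewrite (indep_sub s iI).
Qed.

Lemma main l : forall m (K : {set T}) (F : {set {set T}}), ind K ->
  (forall A, A \in F -> [/\ #|A| = l, [disjoint A & K] & circuit M (A :|: K)]) ->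
  f l m <= #|F| ->
  exists D : nat -> {set T}, (forall i, i < m -> ~~ ind (D i :|: K)) /\
    (forall i j, i < m -> j < m -> i != j -> [disjoint D i & D j]).
Proof.
elim: l => [|l IH] m K F iK HF.
  rewrite /= => /card_gt0P [A AF].
  case: (HF A AF) => /eqP; rewrite cards_eq0 => /eqP -> _ c.
  by move: (circuit_dep c); rewrite set0U iK.
move=> hF.
pose P := fun G : {set {set T}} => (G \subset F) && trivIset G.
have P0 : P set0.
  rewrite /P sub0set /=; apply/trivIsetP => A B; by rewrite inE.
case: (maxset_exists P0) => G /maxsetP [/andP [GF tG] maxG] _.
case: (leqP m #|G|) => [mG | Gm].
  exists (fun i => nth set0 (enum G) i).
  have inG : forall i, i < m -> nth set0 (enum G) i \in G.
    move=> i im; rewrite -mem_enum; apply: mem_nth; rewrite -cardE.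
    exact: leq_trans im mG.
  split.
    move=> i im; case: (HF _ (subsetP GF _ (inG i im))) => _ _ c.
    exact: circuit_dep c.
  move=> i j im jm nij; apply: (trivIsetP tG); [exact: inG|exact: inG|].
  rewrite nth_uniq ?enum_uniq // -cardE; exact: leq_trans _ mG.
set S := cover G.
have cS : #|S| <= m * l.+1.
  apply: leq_trans (leq_card_cover G).1 _.
  rewrite (eq_bigr (fun _ => l.+1)); last first.
    by move=> A AG; case: (HF A (subsetP GF _ AG)).
  by rewrite sum_nat_const leq_mul2r (ltnW Gm) orbT.
have meet : forall A, A \in F -> exists2 x, x \in S & x \in A.
  move=> A AF; case: (HF A AF) => cA dAK cAK.
  case: (boolP [disjoint A & S]) => [dAS|]; last first.
    rewrite -setI_eq0 => /set0Pn [w]; rewrite inE => /andP [wA wS].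
    by exists w.
  have PG' : P (A |: G).
    rewrite /P subUset sub1set AF GF /=.
    apply/trivIsetP => B1 B2; rewrite !inE.
    move=> /orP [/eqP -> | b1] /orP [/eqP -> | b2] neq.
    - by rewrite eqxx in neq.
    - exact: disjointWr (bigcup_sup _ b2) dAS.
    - rewrite disjoint_sym; exact: disjointWr (bigcup_sup _ b1) dAS.
    - exact: (trivIsetP tG).
  have e := maxG _ PG' (subsetUr _ _).
  have AG : A \in G by rewrite -e setU11.
  have : 0 < #|A| by rewrite cA.
  case/card_gt0P => w wA.
  by case: (disjP dAS wA (subsetP (bigcup_sup _ AG) w wA)).
set N := f l m.*2.
case: (boolP [exists x in S, N < #|[set A in F | x \in A]|]).
  case/exists_inP => x xS bigx.
  set Fx := [set A in F | x \in A] in bigx.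
  have ixK : ind (x |: K).
    have : 1 < #|Fx| by apply: leq_ltn_trans bigx; exact: f_pos.
    case/card_gt1P => A1 [A2 []]; rewrite !inE => /andP [A1F xA1] /andP [A2F xA2] n12.
    apply/negPn/negP => dxK.
    case: (dep_circuit dxK) => C cC sC.
    case: (HF A1 A1F) => _ d1 c1; case: (HF A2 A2F) => _ d2 c2.
    have sub : forall A : {set T}, x \in A -> x |: K \subset A :|: K.
      by move=> A xA; rewrite subUset sub1set in_setU xA subsetUr.
    have e1 := circuit_sub cC c1 (subset_trans sC (sub _ xA1)).
    have e2 := circuit_sub cC c2 (subset_trans sC (sub _ xA2)).
    have e : A1 = A2.
      apply/setP => w; case: (boolP (w \in K)) => wK.
        by rewrite (disjointFl d1 wK) (disjointFl d2 wK).
      have : (w \in A1 :|: K) = (w \in A2 :|: K) by rewrite -e1 -e2.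
      by rewrite !in_setU (negbTE wK) !orbF.
    by rewrite e eqxx in n12.
  pose F' := [set A :\ x | A in Fx].
  have cF' : #|F'| = #|Fx|.
    apply: card_in_imset => A B; rewrite !inE => /andP [_ xA] /andP [_ xB] e.
    by rewrite -(setD1K xA) e setD1K.
  have HF' : forall A', A' \in F' ->
      [/\ #|A'| = l, [disjoint A' & x |: K] & circuit M (A' :|: (x |: K))].
    move=> A' /imsetP [A]; rewrite inE => /andP [AF xA] ->.
    case: (HF A AF) => cA dA cAK; split.
    - by move: cA; rewrite (cardsD1 x A) xA add1n => [[]].
    - apply: mkdisj => w; rewrite !inE => /andP [nwx wA] /orP [/eqP wx|wK].
        by rewrite wx eqxx in nwx.
      exact: disjP dA wA wK.
    - have -> : A :\ x :|: (x |: K) = A :|: K.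
        apply/setP => w; rewrite !inE; case: eqVneq => [->|nwx] /=.
          by rewrite xA.
        done.
      exact: cAK.
  have := IH m.*2 (x |: K) F' ixK HF'.
  rewrite cF' => /(_ (ltnW bigx)) [D [Ddep Ddis]].
  exists (fun i => D i.*2 :|: D i.*2.+1); split.
    move=> i im.
    have h1 : i.*2 < m.*2 by rewrite ltn_double.
    have h2 : i.*2.+1 < m.*2 by rewrite -doubleS leq_double.
    have h3 : i.*2 != i.*2.+1 by rewrite neq_ltn ltnSn.
    exact: key ixK (Ddis _ _ h1 h2 h3) (Ddep _ h1) (Ddep _ h2).
  move=> i j im jm nij; apply: mkdisj => w; rewrite !in_setU.
  move=> /orP [a|a] /orP [b|b]; apply: (disjP (Ddis _ _ _ _ _) a b); lia.
rewrite negb_exists_in => /forall_inP small; exfalso.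
have h1 : #|F| <= \sum_(x in S) #|[set A in F | x \in A]|.
  apply: leq_trans (card_bigcup_le _ _); apply: subset_leq_card.
  apply/subsetP => A AF; case: (meet A AF) => x xS xA.
  by apply/bigcupP; exists x => //; rewrite inE AF xA.
have h2 : \sum_(x in S) #|[set A in F | x \in A]| <= #|S| * N.
  rewrite -sum_nat_const; apply: leq_sum => x xS.
  by rewrite leqNgt; exact: small.
have h3 : #|S| * N <= m * l.+1 * N by rewrite leq_mul2r cS orbT.
move: hF; rewrite /= -/N => hF.
have : m * l.+1 * N < m.+1 * l.+1 * N.+1.
  exact: ineq.
move=> h4.
have := leq_trans (leq_trans h1 h2) h3.
move=> h5; have := leq_ltn_trans h5 h4; rewrite ltnNge hF //.
Qed.

End Mat.

Theorem lemma3p2 :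
  exists g : nat -> nat -> nat,
    (forall l d, 0 < l -> 0 < d -> 0 < g l d) /\
    forall (l d : nat), 0 < l -> 0 < d ->
    forall (T : finType) (M : matroid T),
      g l d <= #|circuits_of_size M l| ->
      exists F : {set {set T}},
        [/\ #|F| = d,
            (forall C, C \in F -> circuit M C) &
            (forall C1 C2, C1 \in F -> C2 \in F -> C1 != C2 -> [disjoint C1 & C2])].
Proof.
exists f; split; first by move=> l d _ _; exact: f_pos.
move=> l d _ _ T M hg.
have HF : forall A, A \in circuits_of_size M l ->
    [/\ #|A| = l, [disjoint A & set0] & circuit M (A :|: set0)].
  move=> A; rewrite inE => /andP [cA /eqP sA]; split => //.
    by apply: mkdisj => w _; rewrite inE.
  by rewrite setU0.
have [D [Ddep Ddis]] := main (indep0 M) HF hg.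
pose C i := odflt set0 [pick C | circuit M C & C \subset D i].
have HC : forall i, i < d -> circuit M (C i) /\ C i \subset D i.
  move=> i id; rewrite /C; case: pickP => [C0 /andP [c s] | none] //=.
  exfalso; have := Ddep i id; rewrite setU0 => /dep_circuit [C0 c s].
  by have := none C0; rewrite c s.
have ne : forall i, i < d -> exists w, w \in C i.
  move=> i id; have [c _] := HC i id; apply/set0Pn; apply/eqP => e.
  by move: (circuit_dep c); rewrite e (indep0 M).
exists [set C (nat_of_ord i) | i : 'I_d]; split.
- rewrite card_imset ?card_ord //.
  move=> i j e; apply: val_inj => /=; apply/eqP; apply/negP => /negP nij.
  have [_ si] := HC i (ltn_ord i); have [_ sj] := HC j (ltn_ord j).
  have [w wi] := ne i (ltn_ord i).
  have wj : w \in C j by rewrite -e.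
  exact: disjP (Ddis _ _ (ltn_ord i) (ltn_ord j) nij) (subsetP si w wi) (subsetP sj w wj).
- by move=> C0 /imsetP [i _ ->]; exact: (HC i (ltn_ord i)).1.
- move=> C1 C2 /imsetP [i _ ->] /imsetP [j _ ->] neq.
  have nij : nat_of_ord i != nat_of_ord j.
    by apply/negP => /eqP e; rewrite e eqxx in neq.
  have [_ si] := HC i (ltn_ord i); have [_ sj] := HC j (ltn_ord j).
  exact: disjointW si sj (Ddis _ _ (ltn_ord i) (ltn_ord j) nij).
Qed.
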